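(* For every integer $n\ge 1$, the $n$-dimensional volume of \[ \mathcal{T}^n=\left\{x\in\mathbb{R}^n : \|x\|_\infty\le 1 \text{ and } 1+\sum_{i=1}^n x_i\ge 0\right\} \] is \[ \mathrm{Vol}(\mathcal{T}^n) = 2^n \left[1 - \frac{1}{n!}\sum_{k=0}^{\lfloor \frac{n-1}{2} \rfloor} (-1)^k\binom{n}{k} \left(\frac{n-1}{2}-k \right)^n \right]. \]
   Context: $\mathcal{T}^n$ is called the trace nonnegative polytope. Here $0^n$ with $n\ge1$ equals $0$. *)

(* Defs.v *)
From HB Require Import structures.
From mathcomp Require Import all_boot all_order all_algebra.
From mathcomp Require Import all_classical all_reals all_analysis.
Set Implicit Arguments. Unset Strict Implicit. Unset Printing Implicit Defensive.
Import Order.TTheory GRing.Theory Num.Theory.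
Local Open Scope classical_set_scope.
Local Open Scope ring_scope.

Definition rcons0 (R : realType) (n : nat) (x : R) (y : 'rV[R]_n) : 'rV[R]_n.+1 :=
  \row_(i < n.+1) (if unlift ord0 i is Some j then y ord0 j else x).

(* For Borel sets this coincides with the n-dimensional Lebesgue measure. *)
Fixpoint volume (R : realType) (n : nat) : set 'rV[R]_n -> \bar R :=
  match n return set 'rV[R]_n -> \bar R with
  | 0 => fun A => (if pselect (A (0%R : 'rV[R]_0)) then 1 else 0)%E
  | m.+1 => fun A =>
      (\int[@lebesgue_measure R]_(x in [set: R]) volume [set y | A (rcons0 x y)])%E
  end.

Definition trace_nonneg_polytope (R : realType) (n : nat) : set 'rV[R]_n :=
  [set x | (\big[Num.max/0]_(i < n) `|x ord0 i| <= 1) /\ 0 <= 1 + \sum_(i < n) x ord0 i].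

(* Main.v *)
Require Import Defs.
From HB Require Import structures.
From mathcomp Require Import all_boot all_order all_algebra.
From mathcomp Require Import all_classical all_reals all_analysis.
From mathcomp Require Import measurable_realfun.
From mathcomp Require Import ring lra.
Import Order.TTheory GRing.Theory Num.Theory.
Import numFieldNormedType.Exports.
Local Open Scope classical_set_scope.
Local Open Scope ring_scope.

Lemma bXn_derivable (R : realType) (b : R) n x : derivable (fun y => (b - y) ^+ n) x 1.
Proof.
have := @derivableX _ _ (fun y : R => b - y) n x 1.
by rewrite fctE; apply; exact: derivableB.
Qed.

Lemma derive_bXn (R : realType) (b : R) n x :
  (fun y => (b - y) ^+ n)^`()%classic x = - n%:R * (b - x) ^+ n.-1.
Proof.
rewrite (@derive1_comp _ (fun y => b - y) (fun x => x ^+ n))//; last first.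
  exact: exprn_derivable.
rewrite derive1E exp_derive// derive1E deriveB// -derive1E.
by rewrite derive1_cst derive_id sub0r mulrN1 [in RHS]mulNr scaler1.
Qed.

Lemma ftc_bX (R : realType) (b u v : R) n : u < v ->
  (\int[@lebesgue_measure R]_(x in `[u, v]) ((b - x) ^+ n)%:E =
   (((b - u) ^+ n.+1 - (b - v) ^+ n.+1) / n.+1%:R)%:E)%E.
Proof.
move=> uv.
rewrite (@continuous_FTC2 _ _ (fun x => (b - x) ^+ n.+1 / - n.+1%:R))//=.
- by rewrite -EFinB; congr EFin; rewrite invrN !mulrN opprK addrC mulrBl.
- apply: continuous_in_subspaceT => x _.
  apply: (@continuous_comp _ _ _ (fun y => b - y) (fun x => x ^+ n)).
    by apply: cvgB; [exact: cvg_cst|exact: cvg_id].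
  exact: exprn_continuous.
- split.
  + by move=> y _; apply: derivableM => //=; exact: bXn_derivable.
  + apply: cvgM; last exact: cvg_cst.
    apply: cvg_at_right_filter; apply: (@cvg_comp _ _ _ (fun y => b - y) (fun x => x ^+ n.+1)).
      by apply: cvgB; [exact: cvg_cst|exact: cvg_id].
    exact: exprn_continuous.
  + apply: cvg_at_left_filter; apply: cvgM; last exact: cvg_cst.
    apply: (@cvg_comp _ _ _ (fun y => b - y) (fun x => x ^+ n.+1)).
      by apply: cvgB; [exact: cvg_cst|exact: cvg_id].
    exact: exprn_continuous.
- move=> x _; rewrite derive1Mr//; last exact: bXn_derivable.
  rewrite derive_bXn /= mulrAC divff ?mul1r// oppr_eq0 pnatr_eq0.
Qed.
Definition rpos {R : realType} (m : nat) (u : R) : R := if 0 < u then u ^+ m else 0.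

Lemma rpos_patch (R : realType) (b : R) m :
  (fun x => (rpos m (b - x))%:E) =
  ((fun x => ((b - x) ^+ m)%:E) \_ `]-oo, b[)%E.
Proof.
apply/funext => x; rewrite patchE /rpos subr_gt0.
case: ifPn => H.
  by rewrite mem_set //= in_itv /= andbT.
by rewrite memNset //= in_itv /=; apply/negP.
Qed.

Lemma mbX (R : realType) (b : R) m (D : set R) : measurable_fun D (EFin \o (fun x : R => ((b - x) ^+ m))).
Proof.
apply/measurable_EFinP; apply: (measurable_funS measurableT) => //.
apply: continuous_measurable_fun => x.
apply: (@continuous_comp _ _ _ (fun y => b - y) (fun x => x ^+ m)).
  by apply: cvgB; [exact: cvg_cst|exact: cvg_id].
exact: exprn_continuous.
Qed.

Lemma intA (R : realType) (b : R) (m : nat) :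
  (\int[@lebesgue_measure R]_(x in `[(-1)%R, 1%R]) (rpos m (b - x))%:E =
   ((rpos m.+1 (b + 1) - rpos m.+1 (b - 1)) / m.+1%:R)%:E)%E.
Proof.
rewrite rpos_patch -integral_mkcondr.
have [bn|bp] := leP b (-1).
  have -> : (`[-1, 1] `&` `]-oo, b[ = set0 :> set R).
    apply/seteqP; split => x //=; rewrite !in_itv /= => -[/andP[x1 _] xb]; lra.
  rewrite integral_set0 /rpos ifF; last by apply/negbTE; rewrite -leNgt; lra.
  by rewrite ifF ?subrr ?mul0r //; apply/negbTE; rewrite -leNgt; lra.
have [b1|b1] := leP b 1.
  have -> : (`[-1, 1] `&` `]-oo, b[ = `[-1, b[%classic :> set R).
    apply/seteqP; split => x /=; rewrite !in_itv /=.
      by move=> [/andP[-> _] ->].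
    by move=> /andP[x1 xb]; split => //; apply/andP; split => //; lra.
  rewrite integral_itv_bndo_bndc; last exact: mbX.
  rewrite ftc_bX // subrr expr0n subr0 opprK /rpos ifT; last lra.
  by rewrite ifF ?subr0 //; apply/negbTE; rewrite -leNgt; lra.
have -> : (`[-1, 1] `&` `]-oo, b[ = `[-1, 1]%classic :> set R).
  apply/seteqP; split => x /=; rewrite !in_itv /=; first by case.
  by move=> /andP[x0 x1]; split; [rewrite x0 x1|lra].
rewrite ftc_bX; last lra.
rewrite opprK /rpos ifT; last lra.
by rewrite ifT //; lra.
Qed.
Lemma pascal (R : comRingType) (g : nat -> R) n :
  \sum_(0 <= k < n.+1) (-1) ^+ k * 'C(n, k)%:R * (g k - g k.+1) =
  \sum_(0 <= k < n.+2) (-1) ^+ k * 'C(n.+1, k)%:R * g k.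
Proof.
have h1 : \sum_(0 <= k < n.+1) (-1) ^+ k.+1 * 'C(n, k.+1)%:R * g k.+1 =
          \sum_(0 <= k < n) (-1) ^+ k.+1 * 'C(n, k.+1)%:R * g k.+1.
  by rewrite big_nat_recr //= bin_small // mulr0 mul0r addr0.
have h2 : \sum_(0 <= k < n.+1) (-1) ^+ k * 'C(n, k)%:R * g k =
          g 0 + \sum_(0 <= k < n) (-1) ^+ k.+1 * 'C(n, k.+1)%:R * g k.+1.
  by rewrite big_nat_recl // expr0 bin0 !mul1r.
have h3 : \sum_(0 <= k < n.+1) (-1) ^+ k.+1 * 'C(n, k)%:R * g k.+1 =
          - \sum_(0 <= k < n.+1) (-1) ^+ k * 'C(n, k)%:R * g k.+1.
  by rewrite -sumrN; apply: eq_bigr => k _; rewrite exprS mulN1r !mulNr.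
rewrite [RHS]big_nat_recl // expr0 bin0 !mul1r.
under [X in _ = _ + X]eq_bigr do rewrite binS natrD mulrDr mulrDl.
rewrite big_split /= h1 h3.
under eq_bigr do rewrite mulrBr.
rewrite sumrB h2.
ring.
Qed.
Lemma term (R : realType) (n k : nat) : (1 <= n)%N ->
  rpos n (n%:R - 1 - 2 * k%:R : R) =
  2 ^+ n * (if (k < (n.-1)./2.+1)%N then ((n.-1)%:R / 2 - k%:R) ^+ n else 0).
Proof.
move=> hn.
have hn1 : (n.-1)%:R = n%:R - 1 :> R by rewrite -subn1 natrB.
have e : (n%:R - 1 - 2 * k%:R : R) = 2 * ((n.-1)%:R / 2 - k%:R).
  by rewrite hn1; field.
have k2 : (k.*2)%:R = 2 * k%:R :> R by rewrite -mul2n natrM.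
rewrite e /rpos.
case: ltnP => hk.
  rewrite ltnS geq_half_double in hk.
  have : (k.*2)%:R <= (n.-1)%:R :> R by rewrite ler_nat.
  rewrite k2 => hk'.
  case: ifPn => pos; first by rewrite exprMn.
  have -> : (n.-1)%:R / 2 - k%:R = 0 :> R by lra.
  by rewrite expr0n gtn_eqF // mulr0.
rewrite ltn_half_double in hk.
have : (n.-1)%:R < (k.*2)%:R :> R by rewrite ltr_nat.
rewrite k2 => hk'.
rewrite ifF ?mulr0 //; apply/negbTE; rewrite -leNgt; lra.
Qed.

Definition F {R : realType} (n : nat) (c : R) : R :=
  2 ^+ n - \sum_(0 <= k < n.+1)
    ((-1) ^+ k * 'C(n, k)%:R / n`!%:R) * rpos n (n%:R - c - 2 * k%:R).

Lemma Ffinal (R : realType) n : (1 <= n)%N ->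
  F n (1 : R) = 2 ^+ n * (1 - (n`!%:R)^-1 *
      \sum_(0 <= k < (n.-1)./2.+1)
        (-1) ^+ k * 'C(n, k)%:R * ((n.-1)%:R / 2 - k%:R) ^+ n).
Proof.
move=> hn; rewrite /F.
under eq_bigr do rewrite term //.
have hN : ((n.-1)./2.+1 <= n.+1)%N.
  rewrite ltnS; apply: leq_trans (leq_pred n).
  by rewrite leq_half_double -addnn -addSn leq_addl.
rewrite (big_nat_widen _ _ _ _ _ hN) /=.
rewrite mulrBr mulr1 big_distrr /=; congr (_ - _).
rewrite big_distrr /= [RHS]big_mkcond /=; apply: eq_bigr => k _.
case: ifP => _; last by rewrite !mulr0.
ring.
Qed.
Lemma integA (R : realType) (b : R) (m : nat) :
  (@lebesgue_measure R).-integrable `[(-1)%R, 1%R] (fun x => (rpos m (b - x))%:E).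
Proof.
apply/integrableP; split.
  rewrite rpos_patch; apply/measurable_restrict => //.
  exact: mbX.
have ge0 x : (0 <= rpos m (b - x))%R.
  by rewrite /rpos; case: ifPn => // h; rewrite exprn_ge0 // ltW.
under eq_integral do rewrite gee0_abs ?lee_fin //.
by rewrite intA ltry.
Qed.

Definition S {R : realType} (n : nat) (c : R) : set 'rV[R]_n :=
  [set x | (\big[Num.max/0]_(i < n) `|x ord0 i| <= 1) /\ 0 <= c + \sum_(i < n) x ord0 i].

Lemma volume0 (R : realType) n : @volume R n set0 = 0%E.
Proof.
elim: n => [|n IH] /=.
  by case: pselect.
under eq_integral => x _ do rewrite (_ : [set y | set0 (rcons0 x y)] = set0) // IH.
by rewrite integral0.
Qed.

Lemma rcons0_0 (R : realType) n (x : R) (y : 'rV[R]_n) : rcons0 x y ord0 ord0 = x.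
Proof. by rewrite /rcons0 mxE unlift_none. Qed.

Lemma rcons0_lift (R : realType) n (x : R) (y : 'rV[R]_n) j :
  rcons0 x y ord0 (lift ord0 j) = y ord0 j.
Proof. by rewrite /rcons0 mxE liftK. Qed.

Lemma section (R : realType) n (c x : R) :
  [set y | S n.+1 c (rcons0 x y)] = if `|x| <= 1 then S n (c + x) else set0.
Proof.
have hmax y : \big[Num.max/0]_(i < n.+1) `|rcons0 x y ord0 i| =
    Num.max `|x| (\big[Num.max/0]_(i < n) `|y ord0 i|).
  by rewrite big_ord_recl rcons0_0; under eq_bigr do rewrite rcons0_lift.
have hsum y : \sum_(i < n.+1) rcons0 x y ord0 i = x + \sum_(i < n) y ord0 i.
  by rewrite big_ord_recl rcons0_0; under eq_bigr do rewrite rcons0_lift.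
case: ifPn => hx; apply/seteqP; split => y; rewrite /S /= hmax hsum ge_max.
- by move=> [/andP[_ h1] h2]; split => //; rewrite -addrA.
- by move=> [h1 h2]; split; [rewrite hx h1 | rewrite addrA].
- by move=> [/andP[h _] _]; rewrite h in hx.
- by [].
Qed.
Lemma volS (R : realType) n : forall c : R, @volume R n (S n c) = (F n c)%:E.
Proof.
elim: n => [|n IH] c.
  rewrite /= /F big_nat1 expr0 bin0 fact0 /rpos /=.
  have S0 : S 0 c 0 <-> 0 <= c.
    by rewrite /S /= !big_ord0 addr0; split => [[]//|->]; split.
  case: pselect => h /=.
    have c0 : 0 <= c by apply/S0.
    rewrite ifF; first by congr EFin; rewrite mulr0 subr0.
    apply/negbTE; rewrite -leNgt; lra.
  have c0 : c < 0 by rewrite ltNge; apply/negP => /S0.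
  rewrite ifT; last lra.
  by congr EFin; rewrite !expr0; lra.
rewrite /=.
transitivity (\int[@lebesgue_measure R]_(x in `[(-1)%R, 1%R]) (F n (c + x))%:E)%E.
  rewrite [RHS]integral_mkcond; apply: eq_integral => x _ /=; rewrite section patchE.
  case: ifPn => hx.
    by rewrite IH mem_set //= in_itv /= -ler_norml.
  by rewrite volume0 memNset //= in_itv /= -ler_norml; apply/negP.
pose w k : R := (-1) ^+ k * 'C(n, k)%:R / n`!%:R.
pose b k : R := n%:R - c - 2 * k%:R.
have E x : (F n (c + x))%:E =
    ((2 ^+ n : R)%:E - (\sum_(0 <= k < n.+1) w k * rpos n (b k - x))%:E)%E.
  rewrite /F EFinB; congr (_ - EFin _)%E; apply: eq_bigr => k _.
  by rewrite /w /b; congr (_ * rpos _ _); ring.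
under eq_integral do rewrite E.
have int_k k : (@lebesgue_measure R).-integrable `[(-1)%R, 1%R]
    (fun x => (w k * rpos n (b k - x))%:E).
  rewrite (_ : (fun x => _) = (fun x => (w k)%:E * (rpos n (b k - x))%:E)%E); last first.
    by apply/funext => x; rewrite EFinM.
  by apply: integrableZl => //; exact: integA.
rewrite integralB_EFin //; last first.
  rewrite (_ : (EFin \o _) = (fun x => \sum_(0 <= k < n.+1) (w k * rpos n (b k - x))%:E)%E); last first.
    by apply/funext => x /=; rewrite sumEFin.
  by apply: integrable_sum => // k _; exact: int_k.
  apply: continuous_compact_integrable; first exact: segment_compact.
  by apply: continuous_subspaceT => x; exact: cst_continuous.
have h1 : (\int[@lebesgue_measure R]_(_ in `[(-1)%R, 1%R]) (2 ^+ n : R)%:E = (2 ^+ n * 2 : R)%:E)%E.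
  rewrite integral_cst //= lebesgue_measure_itv /= lte_fin ifT; last lra.
  by rewrite -EFinD -EFinM; congr EFin; lra.
have h2 : (\int[@lebesgue_measure R]_(x in `[(-1)%R, 1%R])
      (\sum_(0 <= k < n.+1) w k * rpos n (b k - x))%:E =
    \sum_(0 <= k < n.+1) (w k * ((rpos n.+1 (b k + 1) - rpos n.+1 (b k - 1)) / n.+1%:R))%:E)%E.
  under eq_integral do rewrite -sumEFin.
  rewrite integral_sum //; try (by move=> k; exact: int_k).
  apply: eq_bigr => k _.
  under eq_integral do rewrite EFinM.
  by rewrite integralZl //; [rewrite intA -EFinM | exact: integA].
rewrite h1 h2 sumEFin -EFinB; congr EFin.
pose g j := rpos n.+1 (n.+1%:R - c - 2 * j%:R : R).
have hb1 k : b k + 1 = n.+1%:R - c - 2 * k%:R by rewrite /b -natr1; ring.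
have hb2 k : b k - 1 = n.+1%:R - c - 2 * k.+1%:R by rewrite /b -!natr1; ring.
have nf0 : (n`!%:R : R) != 0 by rewrite pnatr_eq0 -lt0n fact_gt0.
have nS0 : (n.+1%:R : R) != 0 by rewrite pnatr_eq0.
have ht k : w k * ((rpos n.+1 (b k + 1) - rpos n.+1 (b k - 1)) / n.+1%:R) =
    ((n.+1)`!%:R)^-1 * ((-1) ^+ k * 'C(n, k)%:R * (g k - g k.+1)).
  by rewrite hb1 hb2 /w /g factS natrM; field; rewrite nf0 /= addrC natr1.
under eq_bigr do rewrite ht.
rewrite -big_distrr /= pascal /F exprS big_distrr /=.
congr (_ - _); first by rewrite mulrC.
by apply: eq_bigr => k _; rewrite /g; ring.
Qed.

Local Close Scope classical_set_scope.

Theorem corollary1 (R : realType) (n : nat) (hn : (1 <= n)%N) :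
  @volume R n (@trace_nonneg_polytope R n) =
  ((2 ^+ n * (1 - (n`!%:R)^-1 *
      \sum_(0 <= k < (n.-1)./2.+1)
        (-1) ^+ k * 'C(n, k)%:R * ((n.-1)%:R / 2 - k%:R) ^+ n)) : R)%:E.
Proof.
by rewrite (_ : @trace_nonneg_polytope R n = @S R n 1) // volS Ffinal.
Qed.
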